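(* In the setting described in the context (a $k$-player $\alpha$-anchored game, a deterministic strategy for $G^n$, $C=\{m+1,\dots,n\}$, and the random variables $X,Y,Z,\Omega$, event $W$ and quantity $\delta$ defined there), the following hold: (i) $\mathbb{E}_{i\in[m]}\|\mathsf{P}_{X_iY_i\Omega_i|W}-\mathsf{P}_{X_iY_i\Omega_i}\|\le\sqrt{\delta}$; (ii) $\mathbb{E}_{i\in[m]}\|\mathsf{P}_{X_iY_iZ\Omega_{-i}|W}-\mathsf{P}_{X_i|Y_i}\mathsf{P}_{Y_iZ\Omega_{-i}|W}\|\le\sqrt{\delta}$; (iii) $\mathbb{E}_{i\in[m]}\|\mathsf{P}_{Y_iZ\Omega|W}-\mathsf{P}_{Y_i|\Omega_i}\mathsf{P}_{Z\Omega|W}\|\le\sqrt{\delta}$.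
   Context: Let $G=(\mathcal{X},\mathcal{A},\mu,V)$ be a $k$-player game: $\mathcal{X}=\mathcal{X}^1\times\cdots\times\mathcal{X}^k$, $\mathcal{A}=\mathcal{A}^1\times\cdots\times\mathcal{A}^k$ finite, $\mu$ a distribution on $\mathcal{X}$, $V:\mathcal{X}\times\mathcal{A}\to\{0,1\}$. Assume $G$ is $\alpha$-anchored with anchor sets $\mathcal{X}^t_\perp\subseteq\mathcal{X}^t$: the marginal probability that $x^t\in\mathcal{X}^t_\perp$ is at least $\alpha$ for each $t$, and $\mu(x)=\mu(x|_{\overline{F}_x})\prod_{t\in F_x}\mu(x^t)$ for all $x$, where $F_x=\{t:x^t\in\mathcal{X}^t_\perp\}$, $\overline F_x=[k]\setminus F_x$ and $\mu(x|_S)$, $\mu(x^t)$ are marginals. Fix $n$, integers $1\le m<n$, $C=\{m+1,\dots,n\}$, and a deterministic strategy for $G^n$, i.e. functions $f^t:(\mathcal{X}^t)^n\to(\mathcal{A}^t)^n$. Let $X=(X_1,\dots,X_n)$ with $X_i=(X_i^1,\dots,X_i^k)$ be distributed as $\mu^{\otimes n}$, let $(A_1^t,\dots,A_n^t)=f^t(X_1^t,\dots,X_n^t)$, $A_i=(A_i^1,\dots,A_i^k)$, and $Z=(A_j)_{j\in C}$. Let $W$ be the event that $V(X_j,A_j)=1$ for all $j\in C$, assume $\Pr(W)>0$, and set $\delta=\frac{|C|\log|\mathcal{A}|+\log(1/\Pr(W))}{m}$. For each $i,t$ let $Y_i^t=X_i^t$ if $X_i^t\notin\mathcal{X}^t_\perp$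 and $Y_i^t=\perp$ otherwise; $Y_i=(Y_i^1,\dots,Y_i^k)$; $Y_i^{-t}$ is $Y_i$ with coordinate $t$ omitted and $Y_i^S=(Y_i^t)_{t\in S}$. For $i\in[m]$ let $D_i$ be a uniformly random subset of $[k]$ of size $k-1$, the $D_i$ independent of each other and of $X$; let $M_i=Y_i^{D_i}$ and $\Omega_i=(D_i,M_i)$; for $j\in C$ let $\Omega_j=X_j$. Let $\Omega=(\Omega_1,\dots,\Omega_n)$ and $\Omega_{-i}$ be $\Omega$ with $\Omega_i$ omitted. Notation: $\mathsf{P}_U$ is the distribution of $U$, $\mathsf{P}_{U|W}$ and $\mathsf{P}_{U|T}$ denote conditional distributions; a product such as $\mathsf{P}_{U}\mathsf{P}_{T|U'}$ denotes the joint distribution $(u,t)\mapsto\mathsf{P}_U(u)\mathsf{P}_{T|U'=u'}(t)$ where $u'$ is the part of $u$ corresponding to $U'$ (e.g. $\mathsf{P}_{X_i|Y_i}\mathsf{P}_{Y_iZ\Omega_{-i}|W}$ is $(x,y,z,\omega)\mapsto\mathsf{P}_{Y_iZ\Omega_{-i}|W}(y,z,\omega)\mathsf{P}_{X_i|Y_i=y}(x)$). $\|\cdot\|$ is total variation distance, and $\mathbb{E}_{i\in[m]}$ is the uniform average over $i\in[m]$. *)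

(* Defs.v *)
From HB Require Import structures.
From mathcomp Require Import all_boot all_order all_algebra.
From mathcomp Require Import reals exp.
Set Implicit Arguments. Unset Strict Implicit. Unset Printing Implicit Defensive.
Import Order.TTheory GRing.Theory Num.Theory.
Local Open Scope ring_scope.

Section Prob.
Variables (R : realType) (S : finType) (P : S -> R).

Definition Pr (E : pred S) : R := \sum_(s | E s) P s.

Definition distr_of (T : finType) (U : S -> T) : T -> R :=
  fun u => Pr (fun s => U s == u).

Definition cond_distr (T : finType) (U : S -> T) (E : pred S) : T -> R :=
  fun u => Pr (fun s => (U s == u) && E s) / Pr E.

(* conditional distribution P_{U1 | U2 = y}(x)  (0 if Pr(U2 = y) = 0) *)
Definition cond_kernel (T1 T2 : finType) (U1 : S -> T1) (U2 : S -> T2)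
  : T2 -> T1 -> R :=
  fun y x => Pr (fun s => (U1 s == x) && (U2 s == y)) / Pr (fun s => U2 s == y).
End Prob.

Definition tv (R : realType) (T : finType) (p q : T -> R) : R :=
  2^-1 * \sum_(t : T) `|p t - q t|.

Definition log2 (R : realType) (x : R) : R := ln x / ln 2.

Section Game.
Variables (R : realType) (k : nat) (Xs As : 'I_k -> finType).

Definition QX := {dffun forall t : 'I_k, Xs t}.
Definition AX := {dffun forall t : 'I_k, As t}.

Definition is_distr (mu : QX -> R) :=
  (forall x, 0 <= mu x) /\ \sum_(x : QX) mu x = 1.

Definition marg (mu : QX -> R) (Sp : {set 'I_k}) (x : QX) : R :=
  \sum_(x' : QX | [forall t in Sp, x' t == x t]) mu x'.

Definition marg1 (mu : QX -> R) (t : 'I_k) (a : Xs t) : R :=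
  \sum_(x' : QX | x' t == a) mu x'.

Definition anchor_players (anc : forall t, {set Xs t}) (x : QX) : {set 'I_k} :=
  [set t | x t \in anc t].

Definition anchored (mu : QX -> R) (alpha : R) (anc : forall t, {set Xs t}) :=
  (forall t, alpha <= \sum_(x : QX | x t \in anc t) mu x) /\
  (forall x : QX, mu x = marg mu (~: anchor_players anc x) x *
                          \prod_(t in anchor_players anc x) marg1 mu (x t)).

Variable n : nat.

(* outcome = (X_1..X_n, D_1..D_n); the D_i for i outside [m] are unused *)
Definition Sp := ({ffun 'I_n -> QX} * {ffun 'I_n -> {set 'I_k}})%type.

Definition sampleP (mu : QX -> R) (w : Sp) : R :=
  (\prod_(i < n) mu (w.1 i)) *
  \prod_(i < n) ((#|w.2 i| == k.-1)%:R /
                 #|[set D : {set 'I_k} | #|D| == k.-1]|%:R).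

Variables (anc : forall t, {set Xs t})
          (f : forall t, {ffun 'I_n -> Xs t} -> {ffun 'I_n -> As t})
          (m : nat).

Definition YT := {dffun forall t : 'I_k, option (Xs t)}.
Definition MT := {dffun forall t : 'I_k, option (option (Xs t))}.
(* Omega_i : either (D_i, M_i) (i in [m]) or X_j (j in C) *)
Definition OT := (({set 'I_k} * MT) + QX)%type.

Definition Xv (i : 'I_n) (w : Sp) : QX := w.1 i.

(* Y_i^t = X_i^t if not anchor, None (= ⊥) otherwise *)
Definition Yv (i : 'I_n) (w : Sp) : YT :=
  @finfun _ (fun t => option (Xs t))
    (fun t => if (w.1 i) t \in anc t then None else Some ((w.1 i) t)).

Definition Av (i : 'I_n) (w : Sp) : AX :=
  @finfun _ (fun t => As t) (fun t => @f t [ffun j => (w.1 j) t] i).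

(* Z = (A_j)_{j in C}, C = {j | m <= j} (0-based indices) *)
Definition Zv (w : Sp) : {ffun 'I_n -> option AX} :=
  [ffun j : 'I_n => if (m <= j)%N then Some (Av j w) else None].

(* M_i = Y_i^{D_i} : coordinates in D_i, None marks coordinates outside D_i *)
Definition Mv (i : 'I_n) (w : Sp) : MT :=
  @finfun _ (fun t => option (option (Xs t)))
    (fun t => if t \in w.2 i then Some (Yv i w t) else None).

Definition Omv (i : 'I_n) (w : Sp) : OT :=
  if (i < m)%N then inl (w.2 i, Mv i w) else inr (w.1 i).

Definition Omall (w : Sp) : {ffun 'I_n -> OT} := [ffun j => Omv j w].

(* Omega_{-i}: None marks the omitted coordinate *)
Definition Omminus (i : 'I_n) (w : Sp) : {ffun 'I_n -> option OT} :=
  [ffun j => if j == i then None else Some (Omv j w)].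

Definition Wev (V : QX -> AX -> bool) : pred Sp :=
  fun w => [forall j : 'I_n, (m <= j)%N ==> V (w.1 j) (Av j w)].

Definition avg_m (F : 'I_n -> R) : R := m%:R^-1 * \sum_(i < n | (i < m)%N) F i.

End Game.

(* Main.v *)
From HB Require Import structures.
From mathcomp Require Import all_boot all_order all_algebra.
From mathcomp Require Import reals exp.
From mathcomp Require Import ring lra.
Require Import Defs.
Set Implicit Arguments. Unset Strict Implicit. Unset Printing Implicit Defensive.
Import Order.TTheory GRing.Theory Num.Theory.
Local Open Scope ring_scope.
Section Basic.
Variable R : realType.

Lemma ln_le_sub1 (x : R) : 0 < x -> ln x <= x - 1.
Proof. move=> x0; have := @le_ln1Dx R (x - 1); rewrite [1 + _]addrC subrK; apply; lra. Qed.

Lemma ln_prod (I : finType) (P : pred I) (F : I -> R) :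
  (forall i, P i -> 0 < F i) -> ln (\prod_(i | P i) F i) = \sum_(i | P i) ln (F i).
Proof.
move=> H.
suff: (\sum_(i | P i) ln (F i) = ln (\prod_(i | P i) F i)) /\ 0 < \prod_(i | P i) F i.
  by case=> ->.
apply: (big_rec2 (fun s q => s = ln q /\ 0 < q)); first by rewrite ln1.
move=> i y1 y2 Pi [-> hy]; split; last by rewrite mulr_gt0 // H.
by rewrite lnM // posrE // H.
Qed.

Lemma cauchy_schwarz (I : finType) (P : pred I) (x y : I -> R) :
  (\sum_(i | P i) x i * y i) ^+ 2 <= (\sum_(i | P i) x i ^+ 2) * (\sum_(i | P i) y i ^+ 2).
Proof.
rewrite expr2 mulr_suml; under eq_bigr do rewrite mulr_sumr.
rewrite mulr_suml; under [X in _ <= X]eq_bigr do rewrite mulr_sumr.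
set RR := \sum_(i | P i) \sum_(j | P j) x i ^+ 2 * y j ^+ 2.
have E : RR = \sum_(i | P i) \sum_(j | P j) (x j ^+ 2 * y i ^+ 2).
  by rewrite /RR exchange_big.
apply: (@le_trans _ _ ((\sum_(i | P i) \sum_(j | P j) (x i ^+ 2 * y j ^+ 2 + x j ^+ 2 * y i ^+ 2)) / 2)).
  rewrite ler_pdivlMr // mulr_suml; apply: ler_sum => i _; rewrite mulr_suml; apply: ler_sum => j _.
  have h : 0 <= (x i * y j - x j * y i) ^+ 2 by apply: sqr_ge0.
  nra.
under eq_bigr do rewrite big_split /=.
rewrite big_split /= -E ler_pdivrMr //. rewrite -/RR; lra.
Qed.

End Basic.

Section Prob.
Variables (R : realType) (S : finType) (p : S -> R).
Hypothesis p0 : forall s, 0 <= p s.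
Hypothesis p1 : \sum_s p s = 1.

Definition Ex (F : S -> R) := \sum_s p s * F s.

Lemma Pr_ge0 (E : pred S) : 0 <= Pr p E.
Proof. by apply: sumr_ge0. Qed.

Lemma eq_Pr (E1 E2 : pred S) : E1 =1 E2 -> Pr p E1 = Pr p E2.
Proof. by move=> h; apply: eq_bigl. Qed.

Lemma Pr_mono (E1 E2 : pred S) : (forall s, E1 s -> E2 s) -> Pr p E1 <= Pr p E2.
Proof.
move=> h; rewrite /Pr [X in _ <= X]big_mkcond [X in X <= _]big_mkcond.
apply: ler_sum => s _; case E: (E1 s); first by rewrite h.
by case: (E2 s).
Qed.

Lemma Pr_le1 (E : pred S) : Pr p E <= 1.
Proof. rewrite -p1 /Pr big_mkcond; apply: ler_sum => s _; by case: (E s). Qed.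

Lemma Pr_pt (E : pred S) w : E w -> p w <= Pr p E.
Proof. by move=> Ew; rewrite /Pr (bigD1 w) //= lerDl sumr_ge0. Qed.

Lemma Pr_true : Pr p (fun _ => true) = 1.
Proof. by []. Qed.

Lemma Ex_supp_le F G : (forall w, 0 < p w -> F w <= G w) -> Ex F <= Ex G.
Proof.
move=> h; apply: ler_sum => w _; have := p0 w; rewrite le0r => /orP [/eqP -> | pw].
  by rewrite !mul0r.
by rewrite ler_wpM2l // h.
Qed.

Lemma Ex_supp_eq F G : (forall w, 0 < p w -> F w = G w) -> Ex F = Ex G.
Proof.
move=> h; apply: eq_bigr => w _; have := p0 w; rewrite le0r => /orP [/eqP -> | pw].
  by rewrite !mul0r.
by rewrite h.
Qed.

Lemma ExD F G : Ex (fun w => F w + G w) = Ex F + Ex G.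
Proof. by rewrite /Ex -big_split; apply: eq_bigr => w _; rewrite mulrDr. Qed.

Lemma ExB F G : Ex (fun w => F w - G w) = Ex F - Ex G.
Proof. by rewrite /Ex -sumrB; apply: eq_bigr => w _; rewrite mulrBr. Qed.

Lemma ExC c : Ex (fun _ => c) = c.
Proof. by rewrite /Ex -mulr_suml p1 mul1r. Qed.

Lemma Ex_sum (I : finType) (Q : pred I) (F : I -> S -> R) :
  Ex (fun w => \sum_(i | Q i) F i w) = \sum_(i | Q i) Ex (F i).
Proof. rewrite /Ex; under eq_bigr do rewrite mulr_sumr; by rewrite exchange_big. Qed.

Lemma Ex_fiber (T : finType) (V : S -> T) (h : T -> R) :
  Ex (fun w => h (V w)) = \sum_t Pr p (fun s => V s == t) * h t.
Proof.
rewrite /Ex (partition_big V xpredT) //=; apply: eq_bigr => t _.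
by rewrite /Pr mulr_suml; apply: eq_bigr => s /eqP ->.
Qed.

Lemma sum_fib (T : finType) (V : S -> T) : \sum_t Pr p (fun s => V s == t) = 1.
Proof.
have := Ex_fiber V (fun _ => 1); rewrite ExC => ->.
by apply: eq_bigr => t _; rewrite mulr1.
Qed.

Lemma fib_pos (T : eqType) (V : S -> T) w : 0 < p w -> 0 < Pr p (fun s => V s == V w).
Proof. by move=> pw; apply: (lt_le_trans pw); apply: Pr_pt => /=. Qed.

Lemma sum_fib_cond (T : finType) (V : S -> T) (E : pred S) :
  \sum_t Pr p (fun s => (V s == t) && E s) = Pr p E.
Proof.
rewrite /Pr [RHS](partition_big V xpredT) //=; apply: eq_bigr => t _.
by apply: eq_bigl => s; rewrite andbC.
Qed.

Lemma sum_fib2 (T1 T2 : finType) (V1 : S -> T1) (V2 : S -> T2) :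
  \sum_(x : T1 * T2) Pr p (fun s => (V1 s == x.1) && (V2 s == x.2)) = 1.
Proof.
rewrite -(sum_fib (fun s => (V1 s, V2 s))); apply: eq_bigr => [[x1 x2]] _.
by apply: eq_Pr => s /=; rewrite xpair_eqE.
Qed.

Lemma exists_supp : exists w, 0 < p w.
Proof.
case: (boolP [exists w, 0 < p w]) => [/existsP [w hw]|]; first by exists w.
move=> /existsPn h; suff : \sum_s p s <= 0 by rewrite p1 ler10.
apply: sumr_le0 => s _; have := h s; by rewrite ltNge negbK.
Qed.

Lemma gibbs (T : finType) (V : S -> T) (q : T -> R) :
  (forall t, 0 <= q t) -> \sum_t q t <= 1 -> (forall w, 0 < p w -> 0 < q (V w)) ->
  0 <= Ex (fun w => ln (Pr p (fun s => V s == V w) / q (V w))).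
Proof.
move=> q0 q1 qp.
pose pV t := Pr p (fun s => V s == t).
apply: (le_trans _ (@Ex_supp_le (fun w => 1 - q (V w) / pV (V w)) _ _)).
  rewrite (Ex_fiber V (fun t => 1 - q t / pV t)).
  rewrite (eq_bigr (fun t => pV t - pV t * (q t / pV t))); last first.
    by move=> t _; rewrite mulrBr mulr1.
  rewrite sumrB sum_fib subr_ge0; apply: le_trans q1; apply: ler_sum => t _.
  case: (eqVneq (pV t) 0) => [->|nz]; first by rewrite mul0r.
  by rewrite mulrCA divff // mulr1.
move=> w pw; have a0 : 0 < pV (V w) by apply: fib_pos.
have b0 := qp w pw.
rewrite -[Pr p _ / _]invf_div lnV ?posrE ?divr_gt0 //.
have := @ln_le_sub1 R (q (V w) / pV (V w)) (divr_gt0 b0 a0); rewrite /pV; lra.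
Qed.

Lemma hell (T : finType) (V : S -> T) (q : T -> R) :
  (forall t, 0 <= q t) -> \sum_t q t <= 1 -> (forall w, 0 < p w -> 0 < q (V w)) ->
  tv (fun t => Pr p (fun s => V s == t)) q ^+ 2 <=
  Ex (fun w => ln (Pr p (fun s => V s == V w) / q (V w))).
Proof.
move=> q0 q1 qp.
pose a t := Pr p (fun s => V s == t).
have a0 t : 0 <= a t by apply: Pr_ge0.
pose BC := \sum_t Num.sqrt (a t * q t).
have hs t : a t * Num.sqrt (q t / a t) = Num.sqrt (a t * q t).
  case: (eqVneq (a t) 0) => [->|nz]; first by rewrite !mul0r sqrtr0.
  have -> : a t * q t = a t ^+ 2 * (q t / a t) by rewrite expr2; field.
  by rewrite (sqrtrM (q t / a t) (sqr_ge0 (a t))) sqrtr_sqr ger0_norm.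
have step1 : 2 - 2 * BC <= Ex (fun w => ln (a (V w) / q (V w))).
  apply: (le_trans _ (@Ex_supp_le (fun w => 2 * (1 - Num.sqrt (q (V w) / a (V w)))) _ _)).
    rewrite (Ex_fiber V (fun t => 2 * (1 - Num.sqrt (q t / a t)))).
    rewrite (eq_bigr (fun t => 2 * a t - 2 * Num.sqrt (a t * q t))); last first.
      by move=> t _; rewrite -hs /a; ring.
    by rewrite sumrB -!mulr_sumr sum_fib mulr1.
  move=> w pw; have a0w : 0 < a (V w) by apply: fib_pos.
  have b0 := qp w pw.
  set y := Num.sqrt (q (V w) / a (V w)).
  have y0 : 0 < y by rewrite sqrtr_gt0 divr_gt0.
  have hy : y ^+ 2 = q (V w) / a (V w) by rewrite sqr_sqrtr // ltW // divr_gt0.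
  rewrite -[a _ / _]invf_div lnV ?posrE ?divr_gt0 // -hy expr2 lnM ?posrE //.
  have := ln_le_sub1 y0; lra.
have step2 : tv a q ^+ 2 <= 2 - 2 * BC.
  rewrite /tv.
  pose sa t := Num.sqrt (a t); pose sb t := Num.sqrt (q t).
  have hab t : `|a t - q t| = `|sa t - sb t| * (sa t + sb t).
    rewrite -{1}(sqr_sqrtr (a0 t)) -{1}(sqr_sqrtr (q0 t)) subr_sqr normrM.
    by rewrite (@ger0_norm _ (Num.sqrt (a t) + Num.sqrt (q t))) // addr_ge0 ?sqrtr_ge0.
  have hCS := cauchy_schwarz xpredT (fun t => `|sa t - sb t|) (fun t => sa t + sb t).
  have hm t : sa t * sb t = Num.sqrt (a t * q t) by rewrite /sa /sb sqrtrM.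
  have X : \sum_t `|sa t - sb t| ^+ 2 = 1 + \sum_t q t - 2 * BC.
    rewrite (eq_bigr (fun t => a t + q t - 2 * Num.sqrt (a t * q t))); last first.
      move=> t _; rewrite real_normK ?num_real // sqrrB -hm /sa /sb !sqr_sqrtr //.
      by rewrite -mulr_natl; lra.
    by rewrite sumrB big_split /= sum_fib -mulr_sumr.
  have Y : \sum_t (sa t + sb t) ^+ 2 = 1 + \sum_t q t + 2 * BC.
    rewrite (eq_bigr (fun t => a t + q t + 2 * Num.sqrt (a t * q t))); last first.
      move=> t _; rewrite sqrrD -hm /sa /sb !sqr_sqrtr //.
      by rewrite -mulr_natl; lra.
    by rewrite !big_split /= sum_fib -mulr_sumr.
  have BC0 : 0 <= BC by apply: sumr_ge0 => t _; apply: sqrtr_ge0.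
  have X0 : 0 <= \sum_t `|sa t - sb t| ^+ 2 by apply: sumr_ge0 => t _; apply: sqr_ge0.
  have qs0 : 0 <= \sum_t q t by apply: sumr_ge0.
  under eq_bigr do rewrite hab.
  set L := \sum_t _ in hCS *.
  move: hCS; rewrite X Y => hCS.
  have h1 : 0 <= (1 - \sum_t q t) * (1 + \sum_t q t + 2 * BC) by apply: mulr_ge0; lra.
  have h2 : 0 <= (1 + \sum_t q t - 2 * BC) * (1 - BC) by apply: mulr_ge0; lra.
  rewrite exprMn; nra.
exact: le_trans step2 step1.
Qed.

End Prob.


Lemma ffun_eqE (I : finType) (T : eqType) (F G : I -> T) :
  ([ffun i => F i] == [ffun i => G i]) = [forall i, F i == G i].
Proof.
apply/eqP/forallP => [/ffunP h i | h].
  by have := h i; rewrite !ffunE => ->.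
by apply/ffunP => i; rewrite !ffunE; apply/eqP.
Qed.

Section Cond.
Variables (R : realType) (S : finType) (P : S -> R) (W : pred S).
Hypothesis P0 : forall s, 0 <= P s.
Hypothesis P1 : \sum_s P s = 1.
Hypothesis PW : 0 < Pr P W.

Definition pi s := P s * (W s)%:R / Pr P W.

Lemma pi0 s : 0 <= pi s.
Proof. by rewrite /pi; apply: divr_ge0; [apply: mulr_ge0 | apply: ltW]. Qed.

Lemma Pr_pi (E : pred S) : Pr pi E = Pr P (fun s => E s && W s) / Pr P W.
Proof.
rewrite /Pr mulr_suml big_mkcondr /=; apply: eq_bigr => s _.
rewrite /pi; case: (W s); rewrite /= ?mulr1 ?mulr0 ?mul0r //.
Qed.

Lemma pi1 : \sum_s pi s = 1.
Proof. by have := Pr_pi (fun _ => true); rewrite /= divff ?gt_eqF. Qed.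

Lemma cd_pi (T : finType) (V : S -> T) v : cond_distr P V W v = Pr pi (fun s => V s == v).
Proof. by rewrite Pr_pi. Qed.

Lemma pi_pos w : 0 < pi w -> 0 < P w.
Proof.
rewrite /pi; have := P0 w; rewrite le0r => /orP [/eqP -> |//].
by rewrite !mul0r ltxx.
Qed.

Lemma Pr_pi_le (E : pred S) : Pr pi E <= Pr P E / Pr P W.
Proof.
rewrite Pr_pi ler_pM2r ?invr_gt0 //; apply: Pr_mono => // s /andP [] //.
Qed.

Lemma lt_Pr (E : pred S) w : 0 < pi w -> E w -> 0 < Pr pi E.
Proof. by move=> pw Ew; apply: (lt_le_trans pw); apply: Pr_pt => //; apply: pi0. Qed.

Lemma lt_PrP (E : pred S) w : 0 < pi w -> E w -> 0 < Pr P E.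
Proof. by move=> /pi_pos pw Ew; apply: (lt_le_trans pw); apply: Pr_pt. Qed.

Lemma ln_div' (x y : R) : 0 < x -> 0 < y -> ln (x / y) = ln x - ln y.
Proof. by move=> x0 y0; rewrite ln_div ?posrE. Qed.

Lemma ln_mul' (x y : R) : 0 < x -> 0 < y -> ln (x * y) = ln x + ln y.
Proof. by move=> x0 y0; rewrite lnM ?posrE. Qed.

Lemma ratio_le1 (x : R) : 0 <= x -> x / x <= 1.
Proof. by move=> x0; case: (eqVneq x 0) => [->|nz]; rewrite ?mul0r ?divff. Qed.

Lemma genchain (I TA TZ TB : finType) (A : I -> S -> TA) (Z : S -> TZ) (B : S -> TB)
  (kk : I -> TA -> TB -> R) (c : TZ -> R) (N : R) :
  (forall i a b, 0 <= kk i a b) -> (forall i b, \sum_a kk i a b <= 1) ->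
  (forall i w, 0 < pi w -> 0 < kk i (A i w) (B w)) ->
  (forall z, 0 <= c z) -> \sum_z c z <= N -> (forall w, c (Z w) = 1) ->
  (forall w, 0 < pi w -> \prod_i kk i (A i w) (B w) * Pr P (fun s => B s == B w)
       = Pr P (fun s => [forall i, A i s == A i w] && (B s == B w))) ->
  forall J : pred I,
  \sum_(i | J i) Ex pi (fun w =>
     ln (Pr pi (fun s => (A i s == A i w) && ((Z s == Z w) && (B s == B w)))
        / (Pr pi (fun s => (Z s == Z w) && (B s == B w)) * kk i (A i w) (B w))))
  <= ln (Pr P W)^-1 + ln N.
Proof.
move=> k0 k1 kp c0 cN c1 hF J.
have pi0' := pi0; have pi1' := pi1.
pose g w := Pr pi (fun s => (Z s == Z w) && (B s == B w)).
pose D i w := Pr pi (fun s => (A i s == A i w) && ((Z s == Z w) && (B s == B w))).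
pose T i w := ln (D i w / (g w * kk i (A i w) (B w))).
have gp w : 0 < pi w -> 0 < g w by move=> pw; apply: (lt_Pr pw); rewrite !eqxx.
have Dp i w : 0 < pi w -> 0 < D i w by move=> pw; apply: (lt_Pr pw); rewrite !eqxx.
have sumg : \sum_(x : TZ * TB) Pr pi (fun s => (Z s == x.1) && (B s == x.2)) = 1.
  exact: sum_fib2.
have T0 i : 0 <= Ex pi (T i).
  pose q (x : TA * (TZ * TB)) := Pr pi (fun s => (Z s == x.2.1) && (B s == x.2.2)) * kk i x.1 x.2.2.
  have := @gibbs R S pi pi0' pi1' _ (fun w => (A i w, (Z w, B w))) q.
  have -> : Ex pi (fun w => ln (Pr pi (fun s => (A i s, (Z s, B s)) == (A i w, (Z w, B w))) /
                     q (A i w, (Z w, B w)))) = Ex pi (T i).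
    apply: eq_bigr => w _; congr (_ * ln (_ / _)); try by apply: eq_Pr => s; rewrite !xpair_eqE.
  apply.
  - by move=> x; apply: mulr_ge0; [apply: Pr_ge0|apply: k0].
  - rewrite -(pair_bigA _ (fun a zb => q (a, zb))) exchange_big /=.
    rewrite -sumg; apply: ler_sum => zb _.
    rewrite /q /= -mulr_sumr; apply: ler_piMr; first exact: Pr_ge0.
    exact: k1.
  - by move=> w pw; apply: mulr_gt0; [apply: gp | apply: kp].
apply: (@le_trans _ _ (\sum_i Ex pi (T i))).
  rewrite [X in _ <= X](bigID J) /= lerDl; exact: sumr_ge0.
rewrite -Ex_sum.
pose Es w := Pr pi (fun s => [forall i, A i s == A i w] && ((Z s == Z w) && (B s == B w))).
pose Gt w := ln (Es w / (g w * \prod_i (D i w / g w))).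
have G0 : 0 <= Ex pi Gt.
  pose q (x : {ffun I -> TA} * (TZ * TB)) :=
    Pr pi (fun s => (Z s == x.2.1) && (B s == x.2.2)) *
    \prod_i (Pr pi (fun s => (A i s == x.1 i) && ((Z s == x.2.1) && (B s == x.2.2))) /
             Pr pi (fun s => (Z s == x.2.1) && (B s == x.2.2))).
  have := @gibbs R S pi pi0' pi1' _ (fun w => ([ffun i => A i w], (Z w, B w))) q.
  have -> : Ex pi (fun w => ln (Pr pi (fun s => ([ffun i => A i s], (Z s, B s)) ==
                                          ([ffun i => A i w], (Z w, B w))) /
                     q ([ffun i => A i w], (Z w, B w)))) = Ex pi Gt.
    apply: eq_bigr => w _; congr (_ * ln (_ / _)).
      by apply: eq_Pr => s; rewrite !xpair_eqE ffun_eqE.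
    rewrite /q /=; congr (_ * _); apply: eq_bigr => i _; by rewrite ffunE.
  apply.
  - move=> x; apply: mulr_ge0; first exact: Pr_ge0.
    by apply: prodr_ge0 => i _; apply: divr_ge0; apply: Pr_ge0.
  - rewrite -(pair_bigA _ (fun f zb => q (f, zb))) exchange_big /=.
    rewrite -sumg; apply: ler_sum => zb _.
    rewrite /q /= -mulr_sumr; apply: ler_piMr; first exact: Pr_ge0.
    rewrite -(bigA_distr_bigA (fun i a => Pr pi (fun s => (A i s == a) && ((Z s == zb.1) && (B s == zb.2))) /
             Pr pi (fun s => (Z s == zb.1) && (B s == zb.2)))) /=.
    apply: prodr_ile1 => i _; apply/andP; split.
      by apply: sumr_ge0 => a _; apply: divr_ge0; apply: Pr_ge0.
    rewrite -mulr_suml sum_fib_cond; apply: ratio_le1; exact: Pr_ge0.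
  - move=> w pw /=; apply: mulr_gt0; first exact: gp.
    by apply: prodr_gt0 => i _; rewrite ffunE; apply: divr_gt0; [apply: Dp|apply: gp].
have [w0 pw0] := exists_supp pi1'.
have N1 : 1 <= N.
  apply: le_trans cN; rewrite -(c1 w0) (bigD1 (Z w0)) //= lerDl.
  by apply: sumr_ge0.
have N0 : 0 < N by apply: lt_le_trans N1.
pose PB w := Pr P (fun s => B s == B w).
have PBp w : 0 < pi w -> 0 < PB w by move=> pw; apply: (lt_PrP pw); rewrite eqxx.
have H3 : 0 <= Ex pi (fun w => ln (g w) - ln (PB w) + ln N).
  pose q (x : TZ * TB) := Pr P (fun s => B s == x.2) * c x.1 / N.
  have := @gibbs R S pi pi0' pi1' _ (fun w => (Z w, B w)) q.
  have -> : Ex pi (fun w => ln (Pr pi (fun s => (Z s, B s) == (Z w, B w)) / q (Z w, B w))) =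
            Ex pi (fun w => ln (g w) - ln (PB w) + ln N).
    apply: Ex_supp_eq => // w pw.
    have -> : Pr pi (fun s => (Z s, B s) == (Z w, B w)) = g w.
      by apply: eq_Pr => s; rewrite xpair_eqE.
    rewrite /q /= c1 mulr1 ln_div' ?divr_gt0 ?gp ?PBp // ln_div' ?PBp //; lra.
  apply.
  - move=> x; apply: divr_ge0; last exact: ltW.
    by apply: mulr_ge0; [apply: Pr_ge0|apply: c0].
  - rewrite -(pair_bigA _ (fun z b => q (z, b))) /=.
    rewrite /q /=.
    have -> : \sum_i \sum_j Pr P (fun s => B s == j) * c i / N = \sum_i c i / N.
      by apply: eq_bigr => z _; rewrite -mulr_suml -mulr_suml (sum_fib P1) mul1r.
    by rewrite -mulr_suml ler_pdivrMr // mul1r.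
  - by move=> w pw; rewrite /q /= c1 mulr1 divr_gt0 ?PBp.
pose PAB w := Pr P (fun s => [forall i, A i s == A i w] && (B s == B w)).
have Esle w : 0 < pi w -> Es w <= PAB w / Pr P W.
  move=> pw; apply: le_trans (Pr_pi_le _); apply: Pr_mono => // s /andP [-> /andP [_ ->]] //.
have Esp w : 0 < pi w -> 0 < Es w by move=> pw; apply: (lt_Pr pw); rewrite !eqxx /= andbT; apply/forallP.
apply: (@le_trans _ _ (Ex pi (fun w => (ln (Pr P W)^-1 + (ln (PB w) - ln (g w))) - Gt w))).
  apply: Ex_supp_le => // w pw.
  have kpos i : 0 < kk i (A i w) (B w) by apply: kp.
  have hprod : \sum_i T i w = ln (Es w) - ln (g w) - Gt w - (ln (PAB w) - ln (PB w)).
    have -> : ln (PAB w) - ln (PB w) = \sum_i ln (kk i (A i w) (B w)).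
      rewrite -ln_prod // /PAB /PB -(hF w pw) ln_mul' ?PBp //; first by lra.
      by apply: prodr_gt0 => i _.
    rewrite /Gt ln_div' ?Esp // ?mulr_gt0 ?prodr_gt0 ?gp // => [|i _]; last first.
      by apply: divr_gt0; [apply: Dp|apply: gp].
    rewrite ln_mul' ?gp ?prodr_gt0 // => [|i _]; last by apply: divr_gt0; [apply: Dp|apply: gp].
    rewrite ln_prod => [|i _]; last by apply: divr_gt0; [apply: Dp|apply: gp].
    rewrite /T; under eq_bigr do rewrite ln_div' ?mulr_gt0 ?Dp ?gp ?kpos // ln_mul' ?gp ?kpos //.
    have -> : \sum_i ln (D i w / g w) = \sum_i (ln (D i w) - ln (g w)).
      by apply: eq_bigr => i _; rewrite ln_div' ?Dp ?gp.
    rewrite !sumrB big_split /=; lra.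
  rewrite hprod.
  have : ln (Es w) <= ln (PAB w) - ln (Pr P W).
    have PABp : 0 < PAB w by apply: (lt_PrP pw); rewrite eqxx andbT; apply/forallP.
    rewrite -ln_div' // ler_ln ?posrE; [exact: Esle pw | exact: Esp pw | exact: divr_gt0].
  rewrite lnV ?posrE //; lra.
rewrite (ExB pi (fun w => ln (Pr P W)^-1 + (ln (PB w) - ln (g w))) Gt).
rewrite (ExD pi (fun _ => ln (Pr P W)^-1) (fun w => ln (PB w) - ln (g w))) (ExC pi1').
move: H3; rewrite (ExD pi (fun w => ln (g w) - ln (PB w)) (fun _ => ln N)) (ExC pi1').
rewrite (ExB pi (fun w => ln (g w)) (fun w => ln (PB w))).
rewrite (ExB pi (fun w => ln (PB w)) (fun w => ln (g w))).
lra.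
Qed.

Lemma coarsen (TX TG TH : finType) (X : S -> TX) (G : S -> TG) (H : S -> TH)
  (h : TG -> TH) (lam : S -> R) :
  (forall w, H w = h (G w)) -> (forall w, 0 < pi w -> 0 < lam w) ->
  Ex pi (fun w => ln (Pr pi (fun s => (X s == X w) && (H s == H w)) /
                      (Pr pi (fun s => H s == H w) * lam w)))
  <= Ex pi (fun w => ln (Pr pi (fun s => (X s == X w) && (G s == G w)) /
                      (Pr pi (fun s => G s == G w) * lam w))).
Proof.
move=> hHG lp.
have pi0' := pi0; have pi1' := pi1.
pose q (x : TX * TG) := Pr pi (fun s => G s == x.2) *
   (Pr pi (fun s => (X s == x.1) && (H s == h x.2)) / Pr pi (fun s => H s == h x.2)).
have := @gibbs R S pi pi0' pi1' _ (fun w => (X w, G w)) q.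
have pXG w : 0 < pi w -> 0 < Pr pi (fun s => (X s == X w) && (G s == G w)).
  by move=> pw; apply: (lt_Pr pw); rewrite !eqxx.
have pXH w : 0 < pi w -> 0 < Pr pi (fun s => (X s == X w) && (H s == H w)).
  by move=> pw; apply: (lt_Pr pw); rewrite !eqxx.
have pG w : 0 < pi w -> 0 < Pr pi (fun s => G s == G w).
  by move=> pw; apply: (lt_Pr pw); rewrite !eqxx.
have pH w : 0 < pi w -> 0 < Pr pi (fun s => H s == H w).
  by move=> pw; apply: (lt_Pr pw); rewrite !eqxx.
have -> : Ex pi (fun w => ln (Pr pi (fun s => (X s, G s) == (X w, G w)) / q (X w, G w))) =
  Ex pi (fun w => ln (Pr pi (fun s => (X s == X w) && (G s == G w)) /
                      (Pr pi (fun s => G s == G w) * lam w))) -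
  Ex pi (fun w => ln (Pr pi (fun s => (X s == X w) && (H s == H w)) /
                      (Pr pi (fun s => H s == H w) * lam w))).
  rewrite -ExB; apply: Ex_supp_eq => // w pw.
  rewrite /q /= -hHG.
  have -> : Pr pi (fun s => (X s, G s) == (X w, G w)) = Pr pi (fun s => (X s == X w) && (G s == G w)).
    by apply: eq_Pr => s; rewrite xpair_eqE.
  rewrite !ln_div' ?mulr_gt0 ?divr_gt0 ?pXG ?pXH ?pG ?pH ?lp //.
  rewrite !ln_mul' ?divr_gt0 ?pXG ?pXH ?pG ?pH ?lp // ?lnV ?posrE ?pH //. all: try by rewrite invr_gt0 pH. lra.
move=> hg; rewrite -subr_ge0; apply: hg.
- by move=> x; apply: mulr_ge0; [apply: Pr_ge0| apply: divr_ge0; apply: Pr_ge0].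
- rewrite -(pair_bigA _ (fun x g => q (x, g))) exchange_big /=.
  rewrite -(sum_fib pi1' G); apply: ler_sum => g _.
  rewrite /q /= -mulr_sumr; apply: ler_piMr; first exact: Pr_ge0.
  rewrite -mulr_suml sum_fib_cond; apply: ratio_le1; exact: Pr_ge0.
- move=> w pw; rewrite /q /= -hHG; apply: mulr_gt0; first exact: pG.
  by apply: divr_gt0; [apply: pXH|apply: pH].
Qed.

End Cond.


Lemma forall_andE (I : finType) (a b : pred I) :
  [forall i, a i] && [forall i, b i] = [forall i, a i && b i].
Proof.
apply/andP/forallP => [[/forallP ha /forallP hb] i | h].
  by rewrite ha hb.
by split; apply/forallP => i; have /andP [] := h i.
Qed.

Lemma prod_nat_forall (R : realType) (I : finType) (e : pred I) :
  \prod_i ((e i)%:R : R) = ([forall i, e i])%:R.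
Proof.
case: (boolP [forall i, e i]) => [/forallP h | /forallPn [i hi]].
  by rewrite big1 // => i _; rewrite h.
by rewrite (bigD1 i) //= (negbTE hi) mul0r.
Qed.

Lemma sum_delta (R : realType) (T : finType) (t0 : T) (F : T -> R) :
  \sum_t (t == t0)%:R * F t = F t0.
Proof.
rewrite (bigD1 t0) //= eqxx mul1r big1 ?addr0 // => t /negbTE ->; by rewrite mul0r.
Qed.

Lemma sum_ind (R : realType) (T : finType) (b : pred T) :
  \sum_t ((b t)%:R : R) = #|b|%:R.
Proof.
rewrite -sumr_const [RHS]big_mkcond /=; apply: eq_bigr => t _; rewrite unfold_in.
by case: (b t).
Qed.

Lemma card_ltm (n m : nat) : (m <= n)%N -> #|[pred j : 'I_n | (j < m)%N]| = m.
Proof.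
move=> hmn; transitivity (\sum_(i < n | (i < m)%N) 1)%N.
  by rewrite -sum1_card; apply: eq_bigl => i; rewrite inE.
rewrite -(big_ord_widen _ (fun _ => 1%N) hmn).
by rewrite -[RHS](card_ord m) -sum1_card; apply: eq_bigl => i.
Qed.

Lemma card_gem (n m : nat) : (m <= n)%N -> #|[pred j : 'I_n | (m <= j)%N]| = (n - m)%N.
Proof.
move=> hmn.
have -> : #|[pred j : 'I_n | (m <= j)%N]| = #|[predC [pred j : 'I_n | (j < m)%N]]|.
  by apply: eq_card => j; rewrite !inE -leqNgt.
have h := cardC [pred j : 'I_n | (j < m)%N]; rewrite card_ltm // card_ord in h.
by rewrite -[in RHS]h addKn.
Qed.

Section Game.
Variables (R : realType) (k : nat) (Xs As : 'I_k -> finType) (mu : QX Xs -> R).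
Variables (n : nat) (anc : forall t, {set Xs t}) (m : nat)
          (f : forall t, {ffun 'I_n -> Xs t} -> {ffun 'I_n -> As t}).
Hypothesis k0 : (0 < k)%N.
Hypothesis hmu : is_distr mu.

Local Notation P := (sampleP (n:=n) mu).

Definition nu (D : {set 'I_k}) : R :=
  (#|D| == k.-1)%:R / #|[set D : {set 'I_k} | #|D| == k.-1]|%:R.

Lemma nu0 D : 0 <= nu D.
Proof. by rewrite /nu divr_ge0 ?ler0n. Qed.

Lemma nu_sum : \sum_D nu D = 1.
Proof.
rewrite /nu -mulr_suml sum_ind.
have -> : #|(fun D : {set 'I_k} => #|D| == k.-1)| = #|[set D : {set 'I_k} | #|D| == k.-1]|.
  by rewrite cardsE.
rewrite divff // pnatr_eq0 card_draws card_ord -(subn1 k) bin_sub // bin1.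
by rewrite -lt0n.
Qed.

Lemma mu0 x : 0 <= mu x.
Proof. by case: hmu. Qed.

Lemma mu_sum : \sum_x mu x = 1.
Proof. by case: hmu. Qed.

Lemma big_prod_Sp (F : 'I_n -> QX Xs -> {set 'I_k} -> R) :
  \sum_(w : Sp Xs n) \prod_i F i (w.1 i) (w.2 i) = \prod_i \sum_x \sum_D F i x D.
Proof.
rewrite -(pair_bigA _ (fun (f1 : {ffun 'I_n -> QX Xs}) (f2 : {ffun 'I_n -> {set 'I_k}}) => \prod_i F i (f1 i) (f2 i))) /=.
rewrite bigA_distr_bigA; apply: eq_bigr => f1 _.
by rewrite bigA_distr_bigA.
Qed.

Lemma P0 w : 0 <= P w.
Proof.
rewrite /sampleP; apply: mulr_ge0; apply: prodr_ge0 => i _; first exact: mu0.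
exact: nu0.
Qed.

Lemma Pr_prod0 (E : 'I_n -> QX Xs -> {set 'I_k} -> bool) :
  Pr P (fun w => [forall i, E i (w.1 i) (w.2 i)]) =
  \prod_i \sum_x \sum_D (E i x D)%:R * mu x * nu D.
Proof.
rewrite -big_prod_Sp /Pr big_mkcond /=; apply: eq_bigr => w _.
rewrite big_split big_split /= prod_nat_forall /sampleP.
by case: [forall i, _]; rewrite ?mul1r ?mul0r ?mulrA.
Qed.

Lemma sum_munu : \sum_x \sum_D mu x * nu D = 1.
Proof.
by under eq_bigr do rewrite -mulr_sumr nu_sum mulr1; rewrite mu_sum.
Qed.

Lemma P1 : \sum_w P w = 1.
Proof.
transitivity (Pr P (fun w => [forall i : 'I_n, (fun _ _ => true) (w.1 i) (w.2 i)])).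
  by apply: eq_bigl => w; apply/esym/forallP.
rewrite (Pr_prod0 (fun _ _ _ => true)) big1 // => i _.
under eq_bigr do under eq_bigr do rewrite mul1r.
exact: sum_munu.
Qed.

Lemma Pr_single (i : 'I_n) (e : QX Xs -> {set 'I_k} -> bool) :
  Pr P (fun w => e (w.1 i) (w.2 i)) = \sum_x \sum_D (e x D)%:R * mu x * nu D.
Proof.
pose E j := if j == i then e else (fun _ _ => true).
have -> : Pr P (fun w => e (w.1 i) (w.2 i)) = Pr P (fun w => [forall j, E j (w.1 j) (w.2 j)]).
  apply: eq_Pr => w; apply/idP/forallP => [h j | /(_ i)].
    by rewrite /E; case: eqP => // ->.
  by rewrite /E eqxx.
rewrite Pr_prod0 (bigD1 i) //= [X in _ * X]big1 ?mulr1; first by rewrite /E eqxx.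
move=> j /negbTE hj; rewrite /E hj /=.
under eq_bigr do under eq_bigr do rewrite mul1r.
exact: sum_munu.
Qed.

Lemma Pr_prod (E : 'I_n -> QX Xs -> {set 'I_k} -> bool) :
  Pr P (fun w => [forall i, E i (w.1 i) (w.2 i)]) =
  \prod_i Pr P (fun w => E i (w.1 i) (w.2 i)).
Proof. by rewrite Pr_prod0; apply: eq_bigr => i _; rewrite Pr_single. Qed.

End Game.


Section Misc.
Variable R : realType.

Lemma eq_tv (T : finType) (p1 p2 q : T -> R) : p1 =1 p2 -> tv p1 q = tv p2 q.
Proof. by move=> h; rewrite /tv; congr (_ * _); apply: eq_bigr => t _; rewrite h. Qed.

Lemma tv_ge0 (T : finType) (p q : T -> R) : 0 <= tv p q.
Proof. by rewrite /tv mulr_ge0 ?invr_ge0 ?ler0n // sumr_ge0. Qed.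

Lemma ck_ge0 (S : finType) (P : S -> R) (T1 T2 : finType) (U1 : S -> T1) (U2 : S -> T2) y x :
  (forall s, 0 <= P s) -> 0 <= cond_kernel P U1 U2 y x.
Proof. by move=> P0; rewrite /cond_kernel divr_ge0 // Pr_ge0. Qed.

Lemma ck_sum (S : finType) (P : S -> R) (T1 T2 : finType) (U1 : S -> T1) (U2 : S -> T2) y :
  (forall s, 0 <= P s) -> \sum_x cond_kernel P U1 U2 y x <= 1.
Proof.
move=> P0; rewrite /cond_kernel -mulr_suml sum_fib_cond; apply: ratio_le1; exact: Pr_ge0.
Qed.

Lemma sum_cond_ind (I : finType) (Q : pred I) : \sum_(i | Q i) (1 : R) = #|Q|%:R.
Proof.
rewrite -sum_ind big_mkcond /=; apply: eq_bigr => i _; by case: (Q i).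
Qed.

Lemma ln2_gt0 : 0 < ln (2 : R).
Proof. by apply: ln_gt0; rewrite ltr1n. Qed.

Lemma ln2_le1 : ln (2 : R) <= 1.
Proof. have h2 : (0:R) < 2 by []. have := @ln_le_sub1 R 2 h2. lra. Qed.

Lemma avg_final (n m : nat) (t KL : 'I_n -> R) (d : R) :
  (1 <= m)%N -> (m <= n)%N -> (forall i, 0 <= t i) ->
  (forall i : 'I_n, (i < m)%N -> t i ^+ 2 <= KL i) ->
  \sum_(i : 'I_n | (i < m)%N) KL i <= m%:R * d * ln 2 -> avg_m m t <= Num.sqrt d.
Proof.
move=> m1 mn t0 tK hK.
have hCS : (\sum_(i : 'I_n | (i < m)%N) t i) ^+ 2 <= m%:R * \sum_(i : 'I_n | (i < m)%N) t i ^+ 2.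
  have := cauchy_schwarz (fun i : 'I_n => (i < m)%N) (fun _ => 1) t.
  rewrite [X in X ^+ 2 <= _](eq_bigr t) => [|i _]; last by rewrite mul1r.
  rewrite [X in _ <= X * _](eq_bigr (fun _ => 1)) => [|i _]; last by rewrite expr1n.
  by rewrite sum_cond_ind card_ltm.
set S1 := \sum_(i : 'I_n | (i < m)%N) t i in hCS *.
set S2 := \sum_(i : 'I_n | (i < m)%N) t i ^+ 2 in hCS.
have S2K : S2 <= \sum_(i : 'I_n | (i < m)%N) KL i by apply: ler_sum => i; apply: tK.
have M0 : 0 < (m%:R : R) by rewrite ltr0n.
have S10 : 0 <= S1 by apply: sumr_ge0.
rewrite /avg_m -/S1.
set a := m%:R^-1 * S1.
have a0 : 0 <= a by rewrite mulr_ge0 // invr_ge0 ltW.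
have ha : a ^+ 2 * (m%:R ^+ 2) = S1 ^+ 2 by rewrite /a; field; rewrite gt_eqF.
have l2 := ln2_gt0; have l21 := ln2_le1.
have h1 : a ^+ 2 * (m%:R ^+ 2) <= (m%:R ^+ 2) * (d * ln 2).
  rewrite ha; apply: (le_trans hCS); rewrite expr2 -mulrA ler_pM2l //.
  apply: (le_trans S2K); apply: (le_trans hK); rewrite mulrA; lra.
have h2 : a ^+ 2 <= d * ln 2.
  by rewrite -(ler_pM2r (exprn_gt0 2 M0)) [X in _ <= X]mulrC.
have d0 : 0 <= d.
  have : 0 <= d * ln 2 by apply: le_trans h2; apply: sqr_ge0.
  by rewrite pmulr_lge0.
have h3 : a ^+ 2 <= d by apply: (le_trans h2); rewrite ler_piMr.
by rewrite -(ger0_norm a0) -sqrtr_sqr ler_sqrt.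
Qed.

End Misc.


Section HP.
Variables (R : realType) (S : finType) (P : S -> R) (W : pred S).
Hypothesis P0 : forall s, 0 <= P s.
Hypothesis PW : 0 < Pr P W.

Lemma hellprod (TA TG : finType) (A : S -> TA) (G : S -> TG) (K : TA -> TG -> R) :
  (forall a g, 0 <= K a g) -> (forall g, \sum_a K a g <= 1) ->
  (forall w, 0 < pi P W w -> 0 < K (A w) (G w)) ->
  tv (cond_distr P (fun w => (A w, G w)) W) (fun p => cond_distr P G W p.2 * K p.1 p.2) ^+ 2 <=
  Ex (pi P W) (fun w => ln (Pr (pi P W) (fun s => (A s == A w) && (G s == G w)) /
                           (Pr (pi P W) (fun s => G s == G w) * K (A w) (G w)))).
Proof.
move=> K0 K1 Kp.
have pi0' := pi0 P0 PW; have pi1' := pi1 PW.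
rewrite (eq_tv _ (cd_pi P W (fun w => (A w, G w)))).
have := hell pi0' pi1' (V := fun w => (A w, G w)) (q := fun p => cond_distr P G W p.2 * K p.1 p.2).
have -> : Ex (pi P W) (fun w => ln (Pr (pi P W) (fun s => (A s, G s) == (A w, G w)) /
              (cond_distr P G W (A w, G w).2 * K (A w, G w).1 (A w, G w).2))) =
          Ex (pi P W) (fun w => ln (Pr (pi P W) (fun s => (A s == A w) && (G s == G w)) /
                           (Pr (pi P W) (fun s => G s == G w) * K (A w) (G w)))).
  by apply: eq_bigr => w _; rewrite /= cd_pi.
apply.
- by move=> p; apply: mulr_ge0; [rewrite cd_pi; apply: Pr_ge0 | apply: K0].
- rewrite -(pair_bigA _ (fun a g => cond_distr P G W (a, g).2 * K (a, g).1 (a, g).2)) exchange_big /=.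
  rewrite -(sum_fib pi1' G); apply: ler_sum => g _.
  rewrite -mulr_sumr cd_pi; apply: ler_piMr; [exact: Pr_ge0 | exact: K1].
- move=> w pw /=; apply: mulr_gt0; last exact: Kp.
  by rewrite cd_pi; apply: (lt_Pr P0 PW pw).
Qed.

Lemma prod_div (I : finType) (a b : I -> R) :
  (forall i, 0 < b i) -> \prod_i (a i / b i) * \prod_i b i = \prod_i a i.
Proof.
move=> hb; rewrite -big_split; apply: eq_bigr => i _ /=; by rewrite divfK // gt_eqF // hb.
Qed.

End HP.

Lemma prod_cond_const (R : realType) (I : finType) (Q : pred I) (x : R) :
  \prod_(i | Q i) x = x ^+ #|Q|.
Proof. by rewrite -prodr_const; apply: eq_bigl => i. Qed.

Section Main.
Variables (R : realType) (k : nat) (Xs As : 'I_k -> finType) (mu : QX Xs -> R)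
  (V : QX Xs -> AX As -> bool) (anc : forall t, {set Xs t}) (n m : nat)
  (f : forall t, {ffun 'I_n -> Xs t} -> {ffun 'I_n -> As t}).
Hypotheses (k0 : (0 < k)%N) (hmu : is_distr mu) (hm : (1 <= m)%N) (hmn : (m < n)%N).
Local Notation P := (sampleP (n:=n) mu).
Local Notation W := (Wev f m V).
Hypothesis hPW : 0 < Pr P W.

Let PP0 : forall w, 0 <= P w := P0 (n:=n) hmu.
Let PP1 : \sum_w P w = 1 := P1 n k0 hmu.

Definition yF (x : QX Xs) : YT Xs :=
  @finfun _ (fun t => option (Xs t)) (fun t => if x t \in anc t then None else Some (x t)).
Definition oF (i : 'I_n) (x : QX Xs) (D : {set 'I_k}) : OT Xs :=
  if (i < m)%N then inl (D, @finfun _ (fun t => option (option (Xs t)))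
                               (fun t => if t \in D then Some (yF x t) else None))
  else inr x.

Definition dlt : R := ((n - m)%:R * log2 (#|AX As|%:R : R) + log2 (Pr P W)^-1) / m%:R.

Lemma cardA : (0 < #|AX As|)%N.
Proof.
have [w _] := exists_supp PP1.
by apply/card_gt0P; exists (Av f (Ordinal hmn) w).
Qed.

Lemma dlt_eq : m%:R * dlt * ln 2 = (n - m)%:R * ln (#|AX As|%:R) + ln (Pr P W)^-1.
Proof.
have l2 := @ln2_gt0 R; have m0 : (m%:R : R) != 0 by rewrite pnatr_eq0 -lt0n.
by rewrite /dlt /log2; field; rewrite m0 gt_eqF.
Qed.

Lemma lnA_ge0 : 0 <= ln (#|AX As|%:R : R).
Proof. by apply: ln_ge0; rewrite ler1n cardA. Qed.

Definition c3 (z : {ffun 'I_n -> option (AX As)}) : R :=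
  \prod_(j : 'I_n) ((if (m <= j)%N then z j != None else z j == None))%:R.

Lemma sum_c3 : \sum_z c3 z = #|AX As|%:R ^+ (n - m).
Proof.
rewrite /c3 -(bigA_distr_bigA (fun (j : 'I_n) (o : option (AX As)) =>
   ((if (m <= j)%N then o != None else o == None))%:R : R)) /=.
rewrite (eq_bigr (fun j : 'I_n => if (m <= j)%N then (#|AX As|%:R : R) else 1)) => [|j _]; last first.
  case: (m <= j)%N; rewrite sum_ind.
    have := cardC1 (None : option (AX As)); rewrite card_option /= => <-.
    by congr _%:R; apply: eq_card => o.
  have -> : #|(fun o : option (AX As) => o == None)| = 1%N.
    by rewrite -(card1 (None : option (AX As))); apply: eq_card => o.
  by rewrite mulr1n.
by rewrite -big_mkcond prod_cond_const card_gem // ltnW.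
Qed.

Lemma c3Z w : c3 (Zv f m w) = 1.
Proof.
rewrite /c3; apply: big1 => j _; rewrite /Zv ffunE.
by case: (m <= j)%N.
Qed.

Lemma lnN : ln (#|AX As|%:R ^+ (n - m) : R) = (n - m)%:R * ln (#|AX As|%:R).
Proof. by rewrite lnXn ?ltr0n ?cardA // mulr_natl. Qed.

Definition kk3 (i : 'I_n) (y : YT Xs) (o : {ffun 'I_n -> OT Xs}) :=
  cond_kernel P (Yv anc i) (Omv anc m i) (o i) y.

Lemma part3 : avg_m m (fun i =>
        tv (cond_distr P (fun w => (Yv anc i w, (Zv f m w, Omall anc m w))) W)
           (fun p : YT Xs * ({ffun 'I_n -> option (AX As)} * {ffun 'I_n -> OT Xs}) =>
              cond_distr P (fun w => (Zv f m w, Omall anc m w)) W p.2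
              * cond_kernel P (Yv anc i) (Omv anc m i) (p.2.2 i) p.1))
        <= Num.sqrt dlt.
Proof.
pose G w := (Zv f m w, Omall anc m w).
pose KL i := Ex (pi P W) (fun w => ln (Pr (pi P W) (fun s => (Yv anc i s == Yv anc i w) && (G s == G w)) /
       (Pr (pi P W) (fun s => G s == G w) * kk3 i (Yv anc i w) (G w).2))).
have kp i w : 0 < pi P W w -> 0 < kk3 i (Yv anc i w) (Omall anc m w).
  move=> pw; rewrite /kk3 ffunE /cond_kernel; apply: divr_gt0.
    by apply: (@lt_PrP _ _ _ W PP0 _ w pw); rewrite !eqxx.
  by apply: (@lt_PrP _ _ _ W PP0 _ w pw); rewrite !eqxx.
apply: (avg_final (KL := KL)) => //.
- exact: ltnW.
- by move=> i; apply: tv_ge0.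
- move=> i _.
  apply: (hellprod PP0 hPW (A := Yv anc i) (G := G) (K := fun a g => kk3 i a g.2)).
  + by move=> a g; apply: ck_ge0.
  + by move=> g; apply: ck_sum.
  + by move=> w pw; apply: kp.
rewrite dlt_eq -lnN.
have := genchain PP0 PP1 hPW (A := fun i => Yv anc i) (Z := Zv f m) (B := Omall anc m)
   (kk := kk3) (c := c3) (N := #|AX As|%:R ^+ (n - m)).
move=> /(_ _ _ _ _ _ _ _ (fun i : 'I_n => (i < m)%N)).
rewrite addrC; apply.
- by move=> i a b; apply: ck_ge0.
- by move=> i b; apply: ck_sum.
- exact: kp.
- by move=> z; apply: prodr_ge0 => j _; apply: ler0n.
- by rewrite sum_c3.
- exact: c3Z.
move=> w pw.
rewrite (eq_bigr (fun i => cond_kernel P (Yv anc i) (Omv anc m i) (Omv anc m i w) (Yv anc i w)));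
  last by move=> i _; rewrite /kk3 ffunE.
have eB : Pr P (fun s => Omall anc m s == Omall anc m w) =
          \prod_i Pr P (fun s => Omv anc m i s == Omv anc m i w).
  rewrite -(Pr_prod k0 hmu (fun i x D => oF i x D == Omv anc m i w)).
  by apply: eq_Pr => s; rewrite /Omall ffun_eqE.
have eAB : Pr P (fun s => [forall i, Yv anc i s == Yv anc i w] && (Omall anc m s == Omall anc m w)) =
   \prod_i Pr P (fun s => (Yv anc i s == Yv anc i w) && (Omv anc m i s == Omv anc m i w)).
  rewrite -(Pr_prod k0 hmu (fun i x D => (yF x == Yv anc i w) && (oF i x D == Omv anc m i w))).
  by apply: eq_Pr => s; rewrite /Omall ffun_eqE forall_andE.
rewrite eB eAB /cond_kernel prod_div // => i.
by apply: (@lt_PrP _ _ _ W PP0 _ w pw); rewrite !eqxx.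
Qed.

Definition Yall (w : Sp Xs n) : {ffun 'I_n -> YT Xs} := [ffun i => Yv anc i w].
Definition B2 (w : Sp Xs n) := (Yall w, Omall anc m w).
Definition kk2 (i : 'I_n) (x : QX Xs) (b : {ffun 'I_n -> YT Xs} * {ffun 'I_n -> OT Xs}) :=
  cond_kernel P (Xv i) (fun s => (Yv anc i s, Omv anc m i s)) (b.1 i, b.2 i) x.

Lemma oF_eq (i : 'I_n) x x0 D d0 : (i < m)%N -> yF x = yF x0 -> (oF i x D == oF i x0 d0) = (D == d0).
Proof.
move=> him hy; rewrite /oF him hy.
by apply/eqP/eqP => [[->] | ->].
Qed.

Lemma sumD_nu (g : R) : \sum_D g * @nu R k D = g.
Proof. by rewrite -mulr_sumr nu_sum // mulr1. Qed.

Lemma lamkap (i : 'I_n) w : (i < m)%N -> 0 < pi P W w ->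
  cond_kernel P (Xv i) (Yv anc i) (Yv anc i w) (Xv i w) =
  cond_kernel P (Xv i) (fun s => (Yv anc i s, Omv anc m i s)) (Yv anc i w, Omv anc m i w) (Xv i w).
Proof.
move=> him pw.
set x0 := w.1 i; set d0 := w.2 i.
pose Y := \sum_x (yF x == yF x0)%:R * mu x.
have e1 : Pr P (fun s => (Xv i s == Xv i w) && (Yv anc i s == Yv anc i w)) = mu x0.
  rewrite (Pr_single k0 hmu i (fun x D => (x == x0) && (yF x == yF x0))).
  rewrite (eq_bigr (fun x => (x == x0)%:R * mu x)); first by rewrite sum_delta.
  move=> x _; case: (eqVneq x x0) => [->|ne] /=; last by rewrite big1 ?mul0r // => D _; rewrite !mul0r.
  rewrite eqxx /= !mulr1n -[RHS]sumD_nu ?mul1r; apply: eq_bigr => D _; rewrite /= ?mulr1n ?mul1r ?mulrA //.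
have e2 : Pr P (fun s => Yv anc i s == Yv anc i w) = Y.
  rewrite (Pr_single k0 hmu i (fun x D => yF x == yF x0)).
  by apply: eq_bigr => x _; rewrite sumD_nu.
have e3 : Pr P (fun s => (Xv i s == Xv i w) && ((Yv anc i s, Omv anc m i s) == (Yv anc i w, Omv anc m i w)))
          = mu x0 * @nu R k d0.
  rewrite (Pr_single k0 hmu i (fun x D => (x == x0) && ((yF x, oF i x D) == (yF x0, oF i x0 d0)))).
  rewrite (eq_bigr (fun x => (x == x0)%:R * (mu x0 * @nu R k d0))); first by rewrite sum_delta.
  move=> x _; case: (eqVneq x x0) => [->|ne] /=; last by rewrite big1 ?mul0r // => D _; rewrite !mul0r.
  rewrite /= ?mulr1n ?mul1r (eq_bigr (fun D => (D == d0)%:R * (mu x0 * @nu R k D))); first by rewrite sum_delta.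
  by move=> D _; rewrite xpair_eqE eqxx oF_eq // mulrA.
have e4 : Pr P (fun s => (Yv anc i s, Omv anc m i s) == (Yv anc i w, Omv anc m i w)) = Y * @nu R k d0.
  rewrite (Pr_single k0 hmu i (fun x D => (yF x, oF i x D) == (yF x0, oF i x0 d0))).
  rewrite /Y mulr_suml; apply: eq_bigr => x _.
  case: (eqVneq (yF x) (yF x0)) => [hy|ne] /=.
    rewrite (eq_bigr (fun D => (D == d0)%:R * (mu x * @nu R k D))); first by rewrite sum_delta ?mulr1n mul1r.
    by move=> D _; rewrite xpair_eqE hy eqxx oF_eq // mulrA.
  by rewrite ?mulr0n !mul0r big1 // => D _; rewrite xpair_eqE (negbTE ne) !mul0r.
have pos4 : 0 < Y * @nu R k d0.
  by rewrite -e4; apply: (@lt_PrP _ _ _ W PP0 _ w pw); rewrite eqxx.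
have Y0 : Y != 0 by move: pos4; apply: contraTneq => ->; rewrite mul0r ltxx.
have n0 : @nu R k d0 != 0 by move: pos4; apply: contraTneq => ->; rewrite mulr0 ltxx.
rewrite /cond_kernel e1 e2 e3 e4; field.
by rewrite Y0 n0.
Qed.

Lemma part2 : avg_m m (fun i =>
        tv (cond_distr P (fun w => (Xv i w, (Yv anc i w, Zv f m w, Omminus anc m i w))) W)
           (fun p : QX Xs * (YT Xs * {ffun 'I_n -> option (AX As)}
                             * {ffun 'I_n -> option (OT Xs)}) =>
              cond_distr P (fun w => (Yv anc i w, Zv f m w, Omminus anc m i w)) W p.2
              * cond_kernel P (Xv i) (Yv anc i) p.2.1.1 p.1))
        <= Num.sqrt dlt.
Proof.
pose KL i := Ex (pi P W) (fun w => ln (Pr (pi P W) (fun s => (Xv i s == Xv i w) &&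
      ((Zv f m s == Zv f m w) && (B2 s == B2 w))) /
   (Pr (pi P W) (fun s => (Zv f m s == Zv f m w) && (B2 s == B2 w)) * kk2 i (Xv i w) (B2 w)))).
have kp i w : 0 < pi P W w -> 0 < kk2 i (Xv i w) (B2 w).
  move=> pw; rewrite /kk2 /B2 /Yall /= !ffunE /cond_kernel; apply: divr_gt0.
    by apply: (@lt_PrP _ _ _ W PP0 _ w pw); rewrite !eqxx.
  by apply: (@lt_PrP _ _ _ W PP0 _ w pw); rewrite !eqxx.
apply: (avg_final (KL := KL)) => //.
- exact: ltnW.
- by move=> i; apply: tv_ge0.
- move=> i him.
  pose H w := (Yv anc i w, Zv f m w, Omminus anc m i w).
  pose G2 w := (Zv f m w, B2 w).
  pose hh (g : {ffun 'I_n -> option (AX As)} * ({ffun 'I_n -> YT Xs} * {ffun 'I_n -> OT Xs})) :=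
    (g.2.1 i, g.1, [ffun j => if j == i then None else Some (g.2.2 j)]).
  have lp w : 0 < pi P W w -> 0 < cond_kernel P (Xv i) (Yv anc i) (Yv anc i w) (Xv i w).
    move=> pw; rewrite /cond_kernel; apply: divr_gt0.
      by apply: (@lt_PrP _ _ _ W PP0 _ w pw); rewrite !eqxx.
    by apply: (@lt_PrP _ _ _ W PP0 _ w pw); rewrite !eqxx.
  apply: (le_trans (hellprod PP0 hPW (A := Xv i) (G := H)
            (K := fun a h => cond_kernel P (Xv i) (Yv anc i) h.1.1 a) _ _ _)).
  + by move=> a g; apply: ck_ge0.
  + by move=> g; apply: ck_sum.
  + by move=> w pw; apply: lp.
  apply: (le_trans (@coarsen _ _ _ W PP0 hPW _ _ _ (Xv i) G2 H hh
            (fun w => cond_kernel P (Xv i) (Yv anc i) (Yv anc i w) (Xv i w)) _ _)).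
  + move=> w; rewrite /H /hh /G2 /B2 /Yall /= ffunE; congr (_, _).
    by apply/ffunP => j; rewrite !ffunE.
  + exact: lp.
  apply: (Ex_supp_le (pi0 PP0 hPW)) => w pw.
  rewrite (lamkap him pw) /kk2 /B2 /Yall /= !ffunE.
  exact: lexx.
rewrite dlt_eq -lnN.
have := genchain PP0 PP1 hPW (A := fun i => Xv i) (Z := Zv f m) (B := B2)
   (kk := kk2) (c := c3) (N := #|AX As|%:R ^+ (n - m)).
move=> /(_ _ _ _ _ _ _ _ (fun i : 'I_n => (i < m)%N)).
rewrite addrC; apply.
- by move=> i a b; apply: ck_ge0.
- by move=> i b; apply: ck_sum.
- exact: kp.
- by move=> z; apply: prodr_ge0 => j _; apply: ler0n.
- by rewrite sum_c3.
- exact: c3Z.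
move=> w pw.
rewrite (eq_bigr (fun i => cond_kernel P (Xv i) (fun s => (Yv anc i s, Omv anc m i s))
           (Yv anc i w, Omv anc m i w) (Xv i w)));
  last by move=> i _; rewrite /kk2 /B2 /Yall /= !ffunE.
have eB : Pr P (fun s => B2 s == B2 w) =
          \prod_i Pr P (fun s => (Yv anc i s, Omv anc m i s) == (Yv anc i w, Omv anc m i w)).
  rewrite -(Pr_prod k0 hmu (fun i x D => (yF x, oF i x D) == (Yv anc i w, Omv anc m i w))).
  apply: eq_Pr => s; rewrite /B2 /Yall /Omall xpair_eqE !ffun_eqE forall_andE.
  by apply: eq_forallb => i; rewrite xpair_eqE.
have eAB : Pr P (fun s => [forall i, Xv i s == Xv i w] && (B2 s == B2 w)) =
   \prod_i Pr P (fun s => (Xv i s == Xv i w) &&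
                 ((Yv anc i s, Omv anc m i s) == (Yv anc i w, Omv anc m i w))).
  rewrite -(Pr_prod k0 hmu (fun i x D => (x == Xv i w) && ((yF x, oF i x D) == (Yv anc i w, Omv anc m i w)))).
  apply: eq_Pr => s; rewrite /B2 /Yall /Omall xpair_eqE !ffun_eqE !forall_andE.
  by apply: eq_forallb => i; rewrite xpair_eqE.
rewrite eB eAB /cond_kernel prod_div // => i.
by apply: (@lt_PrP _ _ _ W PP0 _ w pw); rewrite !eqxx.
Qed.

Lemma part1 : avg_m m (fun i =>
        tv (cond_distr P (fun w => (Xv i w, Yv anc i w, Omv anc m i w)) W)
           (distr_of P (fun w => (Xv i w, Yv anc i w, Omv anc m i w))))
        <= Num.sqrt dlt.
Proof.
pose A (i : 'I_n) (w : Sp Xs n) := (Xv i w, Yv anc i w, Omv anc m i w).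
pose KL i := Ex (pi P W) (fun w => ln (Pr (pi P W) (fun s => (A i s == A i w) &&
      ((tt == tt) && (tt == tt))) /
   (Pr (pi P W) (fun s => (tt == tt) && (tt == tt)) * distr_of P (A i) (A i w)))).
have pi0' := pi0 PP0 hPW; have pi1' := pi1 hPW.
have kp i w : 0 < pi P W w -> 0 < distr_of P (A i) (A i w).
  by move=> pw; apply: (@lt_PrP _ _ _ W PP0 _ w pw); rewrite !eqxx.
apply: (avg_final (KL := KL)) => //.
- exact: ltnW.
- by move=> i; apply: tv_ge0.
- move=> i him.
  rewrite (eq_tv _ (cd_pi P W (A i))).
  have := hell pi0' pi1' (V := A i) (q := distr_of P (A i)).
  have -> : Ex (pi P W) (fun w => ln (Pr (pi P W) (fun s => A i s == A i w) / distr_of P (A i) (A i w)))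
            = KL i.
    apply: eq_bigr => w _.
    have -> : Pr (pi P W) (fun s => (tt == tt) && (tt == tt)) = 1 by rewrite -pi1'.
    by rewrite mul1r; congr (_ * ln (_ / _)); apply: eq_Pr => s; rewrite andbT.
  apply.
  + by move=> t; apply: Pr_ge0.
  + by rewrite (sum_fib PP1).
  + exact: kp.
rewrite dlt_eq.
have := genchain PP0 PP1 hPW (A := A) (Z := fun _ => tt) (B := fun _ => tt)
   (kk := fun i a (_ : unit) => distr_of P (A i) a) (c := fun _ => 1) (N := 1).
move=> /(_ _ _ _ _ _ _ _ (fun i : 'I_n => (i < m)%N)) h.
apply: le_trans (h _ _ _ _ _ _ _) _.
- by move=> i a b; apply: Pr_ge0.
- by move=> i b; rewrite (sum_fib PP1).
- exact: kp.
- by [].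
- by rewrite (bigD1 tt) //= big_pred0 ?addr0 // => z; case: z.
- by [].
- move=> w pw.
  have -> : Pr P (fun s => tt == tt) = 1 by rewrite -PP1.
  rewrite mulr1.
  have -> : Pr P (fun s => [forall i, A i s == A i w] && (tt == tt)) =
            Pr P (fun s => [forall i, (fun i x D => (x, yF x, oF i x D) == A i w) i (s.1 i) (s.2 i)]).
    by apply: eq_Pr => s; rewrite andbT.
  by rewrite (Pr_prod k0 hmu (fun i x D => (x, yF x, oF i x D) == A i w)).
rewrite ln1 addr0 lerDr; apply: mulr_ge0; [apply: ler0n | apply: lnA_ge0].
Qed.

End Main.

Unset Implicit Arguments.
Set Strict Implicit.

Theorem lemma4p3 (R : realType) (k : nat) (Xs As : 'I_k -> finType)
  (mu : QX Xs -> R) (V : QX Xs -> AX As -> bool)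
  (alpha : R) (anc : forall t, {set Xs t})
  (n m : nat) (f : forall t, {ffun 'I_n -> Xs t} -> {ffun 'I_n -> As t}) :
  (0 < k)%N ->
  is_distr mu ->
  anchored mu alpha anc ->
  (1 <= m)%N -> (m < n)%N ->
  let P := sampleP mu in
  let W := Wev f m V in
  0 < Pr P W ->
  let delta := ((n - m)%:R * log2 (#|AX As|%:R : R) + log2 (Pr P W)^-1) / m%:R in
  [/\ avg_m m (fun i =>
        tv (cond_distr P (fun w => (Xv i w, Yv anc i w, Omv anc m i w)) W)
           (distr_of P (fun w => (Xv i w, Yv anc i w, Omv anc m i w))))
        <= Num.sqrt delta,
      avg_m m (fun i =>
        tv (cond_distr P (fun w => (Xv i w, (Yv anc i w, Zv f m w, Omminus anc m i w))) W)
           (fun p : QX Xs * (YT Xs * {ffun 'I_n -> option (AX As)}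
                             * {ffun 'I_n -> option (OT Xs)}) =>
              cond_distr P (fun w => (Yv anc i w, Zv f m w, Omminus anc m i w)) W p.2
              * cond_kernel P (Xv i) (Yv anc i) p.2.1.1 p.1))
        <= Num.sqrt delta
    & avg_m m (fun i =>
        tv (cond_distr P (fun w => (Yv anc i w, (Zv f m w, Omall anc m w))) W)
           (fun p : YT Xs * ({ffun 'I_n -> option (AX As)} * {ffun 'I_n -> OT Xs}) =>
              cond_distr P (fun w => (Zv f m w, Omall anc m w)) W p.2
              * cond_kernel P (Yv anc i) (Omv anc m i) (p.2.2 i) p.1))
        <= Num.sqrt delta].
Proof.
move=> k0 hmu _ hm hmn P W hPW delta.
split.
- exact: (part1 anc k0 hmu hm hmn hPW).
- exact: (part2 anc k0 hmu hm hmn hPW).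
- exact: (part3 anc k0 hmu hm hmn hPW).
Qed.
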